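(* Let $i,j,h,k\in\{1,2,3\}$ with $i<j$, $h<k$. (1) If $Q\in R$ does not depend on $x_{ij}$, then there exists $\widetilde Q\in R$ not depending on $x_{ij}$ such that $D_4\widetilde Q=Q$. (2) If $Q\in R$ depends neither on $x_{ij}$ nor on $x_{hk}$, then there exists $\widetilde Q\in R$ depending neither on $x_{ij}$ nor on $x_{hk}$ such that $D_4\widetilde Q=Q$.
   Context: $R=\mathrm{Sym}(\mathbb C^4)\otimes\mathrm{Sym}(\Lambda^2\mathbb C^4)$ is identified with the polynomial ring $\mathbb C[x_1,x_2,x_3,x_4,x_{12},x_{13},x_{14},x_{23},x_{24},x_{34}]$, $\partial_i=\partial/\partial x_i$, $\partial_{ij}=\partial/\partial x_{ij}$, and $D_4=\partial_{12}\partial_3-\partial_{13}\partial_2+\partial_{23}\partial_1$. *)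

(* Defs.v *)
From HB Require Import structures.
From mathcomp Require Import all_boot all_order all_algebra.
From mathcomp Require Import reals.
From mathcomp Require Import complex.
From mathcomp Require Import mpoly.
Set Implicit Arguments. Unset Strict Implicit. Unset Printing Implicit Defensive.
Import GRing.Theory Num.Theory.
Local Open Scope ring_scope.

(* Variable indexing of R = Sym(C^4) (x) Sym(Lambda^2 C^4) = C[x_1..x_4, x_12..x_34]:
   x1 -> 0, x2 -> 1, x3 -> 2, x4 -> 3,
   x12 -> 4, x13 -> 5, x14 -> 6, x23 -> 7, x24 -> 8, x34 -> 9. *)
Definition v1 : 'I_10 := @Ordinal 10 0 erefl.
Definition v2 : 'I_10 := @Ordinal 10 1 erefl.
Definition v3 : 'I_10 := @Ordinal 10 2 erefl.
Definition v4 : 'I_10 := @Ordinal 10 3 erefl.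
Definition v12 : 'I_10 := @Ordinal 10 4 erefl.
Definition v13 : 'I_10 := @Ordinal 10 5 erefl.
Definition v14 : 'I_10 := @Ordinal 10 6 erefl.
Definition v23 : 'I_10 := @Ordinal 10 7 erefl.
Definition v24 : 'I_10 := @Ordinal 10 8 erefl.
Definition v34 : 'I_10 := @Ordinal 10 9 erefl.

Notation Rpoly C := {mpoly C[10]}.

Definition D4 {C : comRingType} (p : Rpoly C) : Rpoly C :=
  (p^`M(v3))^`M(v12) - (p^`M(v2))^`M(v13) + (p^`M(v1))^`M(v23).

Definition indep {C : comRingType} (v : 'I_10) (p : Rpoly C) : Prop :=
  forall m, m \in msupp p -> m v = 0%N.

Definition is_x123 (v : 'I_10) : bool := v \in [:: v12; v13; v23].

(* Main.v *)
Require Import Defs.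
From HB Require Import structures.
From mathcomp Require Import all_boot all_order all_algebra.
From mathcomp Require Import reals complex mpoly.
From mathcomp Require Import zify ring.
Import GRing.Theory Num.Theory.
Local Open Scope ring_scope.

Definition dd {C : comRingType} (u w : 'I_10) (p : Rpoly C) := (p^`M(w))^`M(u).

Lemma ddX {C : comRingType} u w (c : C) (m : 'X_{1..10}) :
  dd u w (c *: 'X_[m]) = (c * ((m w) * ((m - U_(w))%MM u))%:R) *: 'X_[m - U_(w) - U_(u)].
Proof. by rewrite /dd !mderivZ !mderivX !mderivZ !mderivX scalerA natrM !scalerA mulrA. Qed.

Lemma ddD {C : comRingType} u w (p q : Rpoly C) : dd u w (p + q) = dd u w p + dd u w q.
Proof. by rewrite /dd !mderivD. Qed.

Lemma add6 (V : zmodType) (a1 a2 b1 b2 c1 c2 : V) :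
  a1 + a2 + (b1 + b2) + (c1 + c2) = a1 + b1 + c1 + (a2 + b2 + c2).
Proof. by rewrite (addrACA a1) (addrACA (a1 + b1)). Qed.

Lemma rotA (V : zmodType) (a b c : V) : a + b + c = b + c + a.
Proof. by rewrite -addrA addrC. Qed.
Lemma rotB (V : zmodType) (a b c : V) : a + b + c = c + a + b.
Proof. by rewrite addrC addrA. Qed.

Definition EE {C : comRingType} u1 w1 (s1 : C) u2 w2 s2 u3 w3 s3 (p : Rpoly C) :=
  s1 *: dd u1 w1 p + s2 *: dd u2 w2 p + s3 *: dd u3 w3 p.

Lemma EED {C : comRingType} u1 w1 (s1 : C) u2 w2 s2 u3 w3 s3 p q :
  EE u1 w1 s1 u2 w2 s2 u3 w3 s3 (p + q) =
  EE u1 w1 s1 u2 w2 s2 u3 w3 s3 p + EE u1 w1 s1 u2 w2 s2 u3 w3 s3 q.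
Proof.
rewrite /EE !ddD !scalerDr.
set a1 := s1 *: _; set a2 := s1 *: _; set b1 := s2 *: _; set b2 := s2 *: _.
set c1 := s3 *: _; set c2 := s3 *: _.
by apply: add6.
Qed.

Lemma D4rot1 {C : comRingType} (p : Rpoly C) : D4 p = EE v12 v3 1 v13 v2 (-1) v23 v1 1 p.
Proof. by rewrite /D4 /EE /dd !scale1r scaleN1r. Qed.
Lemma D4rot2 {C : comRingType} (p : Rpoly C) : D4 p = EE v13 v2 (-1) v23 v1 1 v12 v3 1 p.
Proof. rewrite /D4 /EE /dd !scale1r scaleN1r. exact: rotA. Qed.
Lemma D4rot3 {C : comRingType} (p : Rpoly C) : D4 p = EE v23 v1 1 v12 v3 1 v13 v2 (-1) p.
Proof. rewrite /D4 /EE /dd !scale1r scaleN1r. exact: rotB. Qed.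

Lemma indepZX {C : comRingType} v (c : C) (m : 'X_{1..10}) : m v = 0%N -> indep v (c *: 'X_[m]).
Proof. by move=> H m0 /msuppZ_le; rewrite msuppX inE => /eqP ->. Qed.

Lemma indep0 {C : comRingType} v : indep v (0 : Rpoly C).
Proof. by move=> m0; rewrite msupp0. Qed.

Lemma indepD {C : comRingType} v (p q : Rpoly C) : indep v p -> indep v q -> indep v (p + q).
Proof. by move=> hp hq m0 /msuppD_le; rewrite mem_cat => /orP[/hp|/hq]. Qed.

Lemma core {C : numFieldType} (u1 w1 : 'I_10) (s1 : C) (u2 w2 : 'I_10) (s2 : C) (u3 w3 : 'I_10) (s3 : C)
  (e1 : (u1 == w1) = false) (e2 : (u1 == u3) = false) (e3 : (w1 == u3) = false)
  (e4 : (u1 == u2) = false) (e5 : (w1 == u2) = false) (e6 : (w2 == u2) = false)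
  (e7 : (w1 == u1) = false) (hs1 : s1 != 0)
 (m : 'X_{1..10}) (c : C) : m u3 = 0%N ->
  let m' := (m + U_(u1) + U_(w1))%MM in
  let c0 := c / (s1 * ((m w1).+1 * (m u1).+1)%:R) in
  indep u3 (c0 *: 'X_[m']) /\
  EE u1 w1 s1 u2 w2 s2 u3 w3 s3 (c0 *: 'X_[m']) =
  c *: 'X_[m] + (s2 * (c0 * ((m' w2) * ((m' - U_(w2))%MM u2))%:R)) *: 'X_[m' - U_(w2) - U_(u2)].
Proof.
move=> hm m' c0; split.
  by apply: indepZX; rewrite /m' !mnmDE !mnm1E e2 e3 hm.
rewrite /EE !ddX.
have -> : (m' - U_(w3))%MM u3 = 0%N.
  by rewrite /m' !mnmBE !mnmDE !mnm1E e2 e3 hm.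
rewrite muln0 mulr0 scale0r scaler0 addr0 scalerA; congr (_ *: _ + _).
  rewrite /m' !mnmBE !mnmDE !mnm1E !eqxx e1 e7 /= /c0.
  rewrite !addn0 subn0 !addn1.
  by field; rewrite !nat1r !pnatr_eq0 hs1.
  congr 'X_[_]; apply/mnmP => i; rewrite /m' !mnmBE !mnmDE !mnm1E; lia.
by rewrite scalerA.
Qed.

Lemma G1 {C : numFieldType} (u1 w1 : 'I_10) (s1 : C) (u2 w2 : 'I_10) (s2 : C) (u3 w3 : 'I_10) (s3 : C)
  (e1 : (u1 == w1) = false) (e2 : (u1 == u3) = false) (e3 : (w1 == u3) = false)
  (e4 : (u1 == u2) = false) (e5 : (w1 == u2) = false) (e6 : (w2 == u2) = false)
  (e7 : (w1 == u1) = false) (hs1 : s1 != 0) k :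
  forall (m : 'X_{1..10}) (c : C), m u2 = k -> m u3 = 0%N ->
  exists Qt, indep u3 Qt /\ EE u1 w1 s1 u2 w2 s2 u3 w3 s3 Qt = c *: 'X_[m].
Proof.
elim: k => [|k IH] m c hk hm;
  have [hi he] := core u1 w1 s1 u2 w2 s2 u3 w3 s3 e1 e2 e3 e4 e5 e6 e7 hs1 m c hm.
  eexists; split; first exact: hi.
  rewrite he; set z := (_ - _)%MM u2.
  have -> : z = 0%N by rewrite /z !mnmBE !mnmDE !mnm1E hk e4 e5 e6.
  by rewrite muln0 mulr0 mulr0 scale0r addr0.
set m'' := (_ - U_(w2) - U_(u2))%MM in he.
set c2 := (s2 * _) in he.
have [||Qt1 [hi1 he1]] := IH m'' (- c2).
- by rewrite /m'' !mnmBE !mnmDE !mnm1E hk e4 e5 e6 eqxx /=; lia.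
- by rewrite /m'' !mnmBE !mnmDE !mnm1E e2 e3 hm.
eexists; split; first exact: indepD hi hi1.
by rewrite EED he he1 scaleNr addrK.
Qed.

Lemma G2 {C : numFieldType} (u1 w1 : 'I_10) (s1 : C) (u2 w2 : 'I_10) (s2 : C) (u3 w3 : 'I_10) (s3 : C)
  (e1 : (u1 == w1) = false) (e2 : (u1 == u3) = false) (e3 : (w1 == u3) = false)
  (e4 : (u1 == u2) = false) (e5 : (w1 == u2) = false) (e6 : (w2 == u2) = false)
  (e7 : (w1 == u1) = false) (hs1 : s1 != 0)
  (m : 'X_{1..10}) (c : C) : m u2 = 0%N -> m u3 = 0%N ->
  exists Qt, indep u2 Qt /\ indep u3 Qt /\ EE u1 w1 s1 u2 w2 s2 u3 w3 s3 Qt = c *: 'X_[m].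
Proof.
move=> hk hm.
have [hi he] := core u1 w1 s1 u2 w2 s2 u3 w3 s3 e1 e2 e3 e4 e5 e6 e7 hs1 m c hm.
exists ((c / (s1 * ((m w1).+1 * (m u1).+1)%:R)) *: 'X_[(m + U_(u1) + U_(w1))%MM]).
split; last split; last first.
  rewrite he; set z := (_ - _)%MM u2.
  have -> : z = 0%N by rewrite /z !mnmBE !mnmDE !mnm1E hk e4 e5 e6.
  by rewrite muln0 mulr0 mulr0 scale0r addr0.
  all: first [exact: hi | by apply: indepZX; rewrite !mnmDE !mnm1E e4 e5 hk].
Qed.

Lemma lin_ext {C : comRingType} (Pm : 'X_{1..10} -> Prop) (G : Rpoly C -> Prop)
  (H0 : G 0) (HD : forall p q, G p -> G q -> G (p + q))
  (HX : forall c m, Pm m -> G (c *: 'X_[m])) Q :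
  (forall m, m \in msupp Q -> Pm m) -> G Q.
Proof.
move=> H; rewrite (mpolyE Q); move: H; elim: (msupp Q) => [|x s IH] H.
  by rewrite big_nil.
rewrite big_cons; apply: HD; first by apply: HX; apply: H; rewrite inE eqxx.
by apply: IH => m hm; apply: H; rewrite inE hm orbT.
Qed.

Lemma D4D {C : comRingType} (p q : Rpoly C) : D4 (p + q) = D4 p + D4 q.
Proof. by rewrite !D4rot1 EED. Qed.

Lemma D40 {C : comRingType} : D4 (0 : Rpoly C) = 0.
Proof. by rewrite /D4 !mderiv0 subrr addr0. Qed.

Lemma ext1 {C : comRingType} a
  (HX : forall (c : C) (m : 'X_{1..10}), m a = 0%N -> exists Qt, indep a Qt /\ D4 Qt = c *: 'X_[m])
  (Q : Rpoly C) : indep a Q -> exists Qt, indep a Qt /\ D4 Qt = Q.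
Proof.
move=> hQ; apply: (lin_ext (C := C) (fun m : 'X_{1..10} => m a = 0%N) (fun p => exists Qt, indep a Qt /\ D4 Qt = p)) => //.
- by exists 0; split; [exact: indep0 | exact: D40].
- move=> p q [P1 [h1 e1]] [P2 [h2 e2]]; exists (P1 + P2); split.
    exact: indepD. by rewrite D4D e1 e2.
Qed.

Lemma ext2 {C : comRingType} a b
  (HX : forall (c : C) (m : 'X_{1..10}), m a = 0%N -> m b = 0%N ->
      exists Qt, indep a Qt /\ indep b Qt /\ D4 Qt = c *: 'X_[m])
  (Q : Rpoly C) : indep a Q -> indep b Q -> exists Qt, indep a Qt /\ indep b Qt /\ D4 Qt = Q.
Proof.
move=> ha hb; apply: (lin_ext (C := C) (fun m : 'X_{1..10} => m a = 0%N /\ m b = 0%N) (fun p => exists Qt, indep a Qt /\ indep b Qt /\ D4 Qt = p)).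
- by exists 0; split; [exact: indep0 | split; [exact: indep0 | exact: D40]].
- move=> p q [P1 [h1 [h1' e1]]] [P2 [h2 [h2' e2]]]; exists (P1 + P2); split.
    exact: indepD. split. exact: indepD. by rewrite D4D e1 e2.
- by move=> c m [];  apply: HX.
- by move=> m hm; split; [apply: ha | apply: hb].
Qed.

Theorem mainTheorem6 (R : realType) :
  (forall a : 'I_10, is_x123 a ->
     forall Q : Rpoly R[i], indep a Q ->
       exists Qt : Rpoly R[i], indep a Qt /\ D4 Qt = Q) /\
  (forall a b : 'I_10, is_x123 a -> is_x123 b ->
     forall Q : Rpoly R[i], indep a Q -> indep b Q ->
       exists Qt : Rpoly R[i], indep a Qt /\ indep b Qt /\ D4 Qt = Q).
Proof.
have hm1 : (-1 : R[i]) != 0 by rewrite oppr_eq0 oner_eq0.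
have hp1 : (1 : R[i]) != 0 by rewrite oner_eq0.
have A12 : forall (c : R[i]) (m : 'X_{1..10}), m v12 = 0%N -> exists Qt, indep v12 Qt /\ D4 Qt = c *: 'X_[m].
  move=> c m hm; have [Qt [h e]] := G1 v13 v2 (-1) v23 v1 1 v12 v3 1 erefl erefl erefl erefl erefl erefl erefl hm1 _ m c erefl hm.
  by exists Qt; rewrite D4rot2.
have A13 : forall (c : R[i]) (m : 'X_{1..10}), m v13 = 0%N -> exists Qt, indep v13 Qt /\ D4 Qt = c *: 'X_[m].
  move=> c m hm; have [Qt [h e]] := G1 v23 v1 1 v12 v3 1 v13 v2 (-1) erefl erefl erefl erefl erefl erefl erefl hp1 _ m c erefl hm.
  by exists Qt; rewrite D4rot3.
have A23 : forall (c : R[i]) (m : 'X_{1..10}), m v23 = 0%N -> exists Qt, indep v23 Qt /\ D4 Qt = c *: 'X_[m].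
  move=> c m hm; have [Qt [h e]] := G1 v12 v3 1 v13 v2 (-1) v23 v1 1 erefl erefl erefl erefl erefl erefl erefl hp1 _ m c erefl hm.
  by exists Qt; rewrite D4rot1.
have B1 : forall (c : R[i]) (m : 'X_{1..10}), m v13 = 0%N -> m v23 = 0%N ->
    exists Qt, indep v13 Qt /\ indep v23 Qt /\ D4 Qt = c *: 'X_[m].
  move=> c m h1 h2; have [Qt [ha [hb e]]] := G2 v12 v3 1 v13 v2 (-1) v23 v1 1 erefl erefl erefl erefl erefl erefl erefl hp1 m c h1 h2.
  by exists Qt; rewrite D4rot1.
have B2 : forall (c : R[i]) (m : 'X_{1..10}), m v23 = 0%N -> m v12 = 0%N ->
    exists Qt, indep v23 Qt /\ indep v12 Qt /\ D4 Qt = c *: 'X_[m].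
  move=> c m h1 h2; have [Qt [ha [hb e]]] := G2 v13 v2 (-1) v23 v1 1 v12 v3 1 erefl erefl erefl erefl erefl erefl erefl hm1 m c h1 h2.
  by exists Qt; rewrite D4rot2.
have B3 : forall (c : R[i]) (m : 'X_{1..10}), m v12 = 0%N -> m v13 = 0%N ->
    exists Qt, indep v12 Qt /\ indep v13 Qt /\ D4 Qt = c *: 'X_[m].
  move=> c m h1 h2; have [Qt [ha [hb e]]] := G2 v23 v1 1 v12 v3 1 v13 v2 (-1) erefl erefl erefl erefl erefl erefl erefl hp1 m c h1 h2.
  by exists Qt; rewrite D4rot3.
have sw : forall a b, (forall (c : R[i]) (m : 'X_{1..10}), m a = 0%N -> m b = 0%N ->
    exists Qt, indep a Qt /\ indep b Qt /\ D4 Qt = c *: 'X_[m]) ->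
   (forall (c : R[i]) (m : 'X_{1..10}), m b = 0%N -> m a = 0%N ->
    exists Qt, indep b Qt /\ indep a Qt /\ D4 Qt = c *: 'X_[m]).
  by move=> a b H c m h1 h2; have [Qt [x [y z]]] := H c m h2 h1; exists Qt.
have dg : forall a, (forall (c : R[i]) (m : 'X_{1..10}), m a = 0%N -> exists Qt, indep a Qt /\ D4 Qt = c *: 'X_[m]) ->
   (forall (c : R[i]) (m : 'X_{1..10}), m a = 0%N -> m a = 0%N ->
    exists Qt, indep a Qt /\ indep a Qt /\ D4 Qt = c *: 'X_[m]).
  by move=> a H c m h1 _; have [Qt [x z]] := H c m h1; exists Qt.
split.
  move=> a; rewrite /is_x123 !inE => /or3P[] /eqP -> Q; apply: ext1.
  - exact: A12. - exact: A13. - exact: A23.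
move=> a b; rewrite /is_x123 !inE => /or3P[] /eqP -> /or3P[] /eqP -> Q; apply: ext2.
- exact: dg A12.  - exact: B3.  - exact: sw B2.
- exact: sw B3.  - exact: dg A13.  - exact: B1.
- exact: B2.  - exact: sw B1.  - exact: dg A23.
Qed.
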